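(* Let $\kappa$ be a regular uncountable cardinal, $F$ a free filter on $\omega$, and $\mathbb{P}$ a finite support product of posets such that every finite subproduct is $\kappa$-$F$-Knaster. Then $\mathbb{P}$ is $\kappa$-$F$-Knaster. In particular, when $F$ is an ultrafilter, any finite support product of $\kappa$-$F$-Knaster posets is $\kappa$-$F$-Knaster; likewise any finite support product of $\kappa$-uf-Knaster posets is $\kappa$-uf-Knaster.
   Context: A filter $F$ on $\omega$ is free if it contains all cofinite subsets; $F^+$ is the family of sets meeting every member of $F$. For a poset $\mathbb{P}$ and $\bar p=\langle p_n:n<\omega\rangle$ in $\mathbb{P}$, $\dot W(\bar p)$ names $\{n:p_n\in\dot G\}$. $Q\subseteq\mathbb{P}$ is $F$-linked if for every sequence $\bar p$ in $Q$ some $q\in\mathbb{P}$ forces $\dot W(\bar p)\in F^+$; uf-linked if it is $D$-linked for every non-principal ultrafilter $D$ on $\omega$. $\mathbb{P}$ is $\kappa$-$F$-Knaster (resp. $\kappa$-uf-Knaster) if every subset of size $\kappa$ contains an $F$-linked (resp. uf-linked) subset of size $\kappa$. *)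

(* Defs.v *)
From HB Require Import structures.
From mathcomp Require Import all_boot all_order.
From mathcomp Require Import boolp classical_sets functions cardinality filter.
Set Implicit Arguments. Unset Strict Implicit. Unset Printing Implicit Defensive.
Local Open Scope classical_set_scope.
Local Open Scope card_scope.

(** A regular uncountable cardinal kappa, represented by a type K of
    cardinality kappa. *)
Definition card_lt T U (A : set T) (B : set U) := ~ (B #<= A).

Definition regular_uncountable (K : Type) : Prop :=
  ~ countable [set: K] /\
  (forall (I : set K) (A : K -> set K),
      card_lt I [set: K] -> (forall i, I i -> card_lt (A i) [set: K]) ->
      \bigcup_(i in I) A i <> [set: K]).

Definition free_filter (F : set_system nat) : Prop :=
  ProperFilter F /\ (forall A : set nat, finite_set (~` A) -> F A).

Record fposet := FPoset {
  fcar :> Type;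
  fle : fcar -> fcar -> Prop;
  fle_refl : forall p, fle p p;
  fle_trans : forall p q r, fle p q -> fle q r -> fle p r;
  fle_anti : forall p q, fle p q -> fle q p -> p = q;
  fone : fcar;
  fle_one : forall p, fle p fone }.

Section Knaster.
Variables (T : Type) (le : T -> T -> Prop).

(** q forces  W(pbar) = {n | p_n in G} in F^+ , i.e. for every A in F,
    q forces "exists n in A, p_n in G", i.e. the set of conditions below
    some p_n with n in A is dense below q. *)
Definition forces_Wpos (F : set_system nat) (p : nat -> T) (q : T) : Prop :=
  forall A, F A -> forall r, le r q ->
    exists s n, le s r /\ A n /\ le s (p n).

Definition F_linked (F : set_system nat) (Q : set T) : Prop :=
  forall p : nat -> T, (forall n, Q (p n)) -> exists q, forces_Wpos F p q.

Definition nonprincipal_ultrafilter (D : set_system nat) : Prop :=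
  UltraFilter D /\ free_filter D.

Definition uf_linked (Q : set T) : Prop :=
  forall D, nonprincipal_ultrafilter D -> F_linked D Q.

Definition F_Knaster (K : Type) (F : set_system nat) : Prop :=
  forall X : set T, X #= [set: K] ->
    exists Y : set T, Y `<=` X /\ Y #= [set: K] /\ F_linked F Y.

Definition uf_Knaster (K : Type) : Prop :=
  forall X : set T, X #= [set: K] ->
    exists Y : set T, Y `<=` X /\ Y #= [set: K] /\ uf_linked Y.
End Knaster.

Section Product.
Variables (I : Type) (P : I -> fposet).

Definition support (f : forall i, P i) : set I := [set i | f i <> fone (P i)].

Definition fsprod := {f : forall i, P i | finite_set (support f)}.

Definition fsprod_le (f g : fsprod) : Prop :=
  forall i, fle (proj1_sig f i) (proj1_sig g i).

Definition subprod (J : set I) := {f : forall i, P i | support f `<=` J}.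

Definition subprod_le (J : set I) (f g : subprod J) : Prop :=
  forall i, fle (proj1_sig f i) (proj1_sig g i).
End Product.

(* Main.v *)
Require Import Defs.
From mathcomp Require Import all_boot all_order.
From mathcomp Require Import boolp classical_sets functions cardinality filter.
From mathcomp Require Import zify.
From Stdlib Require List.
Set Implicit Arguments. Unset Strict Implicit. Unset Printing Implicit Defensive.
Local Open Scope classical_set_scope.
Local Open Scope card_scope.
Lemma le_of_inj T U (A : set T) (B : set U) (f : T -> U) :
  (forall x, A x -> B (f x)) -> (forall x y, A x -> A y -> f x = f y -> x = y) ->
  A #<= B.
Proof.
move=> hf hi.
have [g] : $|{injfun A >-> B}|.
  apply/injfunPex; exists f; first by move=> x; apply: hf.
  by move=> x y /set_mem Ax /set_mem Ay; apply: hi.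
exact: inj_card_le g.
Qed.

Lemma inj_of_le T U (A : set T) (B : set U) : A #<= B -> A !=set0 ->
  exists f : T -> U, (forall x, A x -> B (f x)) /\
    (forall x y, A x -> A y -> f x = f y -> x = y).
Proof.
elim/Ppointed: U B => U B.
  rewrite (empty_eq0 B) => /card_le0P -> [] x; by [].
move=> /pcard_leP [f] _; exists f; split.
  by move=> x Ax; apply: funS.
by move=> x y Ax Ay; apply: inj; rewrite inE.
Qed.

Section Card.
Variables (K : Type) (hK : regular_uncountable K).

Definition big S (A : set S) := [set: K] #<= A.

Lemma K_inh : inhabited K.
Proof.
case: (pselect (inhabited K)) => // hn; exfalso; apply: hK.1.
have -> : [set: K] = set0 by apply/seteqP; split => // x; case: hn; constructor.
exact: countable0.
Qed.

Lemma big_mono S (A B : set S) : A `<=` B -> big A -> big B.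
Proof. by move=> AB hA; apply: card_le_trans hA (subset_card_le AB). Qed.

Lemma big_le S U (A : set S) (B : set U) : A #<= B -> big A -> big B.
Proof. by move=> AB hA; apply: card_le_trans hA AB. Qed.

Lemma countable_small S (A : set S) : countable A -> ~ big A.
Proof. by move=> cA bA; apply: hK.1; apply: card_le_trans bA cA. Qed.

Lemma finite_small S (A : set S) : finite_set A -> ~ big A.
Proof. by move=> /finite_set_countable; apply: countable_small. Qed.

Lemma eq_big S (X : set S) : X #= [set: K] -> big X.
Proof. by move=> /card_eqPle []. Qed.

Lemma big_sub_eq S (X Y : set S) : Y `<=` X -> X #= [set: K] -> big Y -> Y #= [set: K].
Proof.
move=> YX /card_eqPle [XK _] bY; apply/card_eqPle; split => //.
exact: card_le_trans (subset_card_le YX) XK.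
Qed.

Lemma union_small (A S : Type) (J : set A) (B : A -> set S) :
  ~ big J -> (forall j, J j -> ~ big (B j)) -> ~ big (\bigcup_(j in J) B j).
Proof.
move=> hJ hB hU; have [k0] := K_inh.
have [f [hf hfi]] := inj_of_le hU (ex_intro _ k0 I).
have hg : forall x, exists j, J j /\ B j (f x).
  by move=> x; have [j Jj Bj] := hf x I; exists j.
pose g x := projT1 (cid (hg x)).
have gP x : J (g x) /\ B (g x) (f x) by rewrite /g; case: cid.
pose rep j := match pselect (exists x, g x = j) with
  | left h => projT1 (cid h) | right _ => k0 end.
have repP x : g (rep (g x)) = g x.
  rewrite /rep; case: pselect => [h|[]]; last by exists x.
  by case: cid.
apply: (hK.2 [set x | rep (g x) = x] (fun i => [set x | g x = g i])).
- move=> bI; apply: hJ; apply: big_le bI.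
  apply: (@le_of_inj _ _ _ _ g) => [x _|x y /= hx hy gxy]; first exact: (gP x).1.
  by rewrite -hx -hy gxy.
- move=> i /= hi bA; apply: (hB (g i) (gP i).1); apply: big_le bA.
  apply: (@le_of_inj _ _ _ _ f) => [x /= gx|x y _ _ /hfi]; last by apply.
  by rewrite -gx; exact: (gP x).2.
- apply/seteqP; split => // x _; exists (rep (g x)) => /=.
    by rewrite repP.
  by rewrite repP.
Qed.

Lemma union2_small S (A B : set S) : ~ big A -> ~ big B -> ~ big (A `|` B).
Proof.
move=> hA hB hU.
have := @union_small bool S [set: bool] (fun b => if b then A else B).
apply => //; first by apply: countable_small; exact: countableP.
  by case.
by apply: big_mono hU => x [Ax|Bx]; [exists true|exists false].
Qed.


Lemma big_n0 S (A : set S) : big A -> A !=set0.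
Proof.
move=> bA; case: (pselect (A !=set0)) => // hn; exfalso.
have A0 : A = set0 by apply/seteqP; split => // x Ax; apply: hn; exists x.
have [k0] := K_inh; move: bA; rewrite A0 => /card_le0P KE.
by have : [set: K] k0 by []; rewrite KE.
Qed.

Lemma shrink T U (X : set T) (pi : T -> U) (Phi : set U -> Prop) :
  (forall V, V #= [set: K] -> exists V', V' `<=` V /\ V' #= [set: K] /\ Phi V') ->
  (forall u, Phi [set u]) -> X #= [set: K] ->
  exists Y, Y `<=` X /\ Y #= [set: K] /\ Phi (pi @` Y).
Proof.
move=> H1 H2 XK; have bX := eq_big XK.
have [x0 _] := big_n0 bX.
case: (pselect (big (pi @` X))) => bV.
  have VK : pi @` X #= [set: K].
    apply/card_eqPle; split => //.
    have /card_eqPle [XK1 _] := XK.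
    exact: card_le_trans (card_image_le pi X) XK1.
  have [V' [V'V [V'K PV']]] := H1 _ VK.
  pose sig v := match pselect (exists x, X x /\ pi x = v) with
    | left h => projT1 (cid h) | right _ => x0 end.
  have sigP v : (pi @` X) v -> X (sig v) /\ pi (sig v) = v.
    move=> [x Xx pxv]; rewrite /sig; case: pselect => [h|[]]; last by exists x.
    by case: cid.
  exists (sig @` V'); split; first by move=> _ [v /V'V /sigP [] ? _ <-].
  split.
    apply: card_eq_trans V'K; apply: inj_card_eq => v w /set_mem /V'V /sigP [_ hv]
      /set_mem /V'V /sigP [_ hw] e.
    by rewrite -hv -hw e.
  suff -> : pi @` (sig @` V') = V' by [].
  apply/seteqP; split.
    by move=> _ [_ [v V'v <-] <-]; rewrite (sigP v (V'V v V'v)).2.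
  by move=> v V'v; exists (sig v); [exists v|rewrite (sigP v (V'V v V'v)).2].
have [v [Vv bF]] : exists v, (pi @` X) v /\ big [set x | X x /\ pi x = v].
  apply: contrapT => hn; apply: (union_small bV (B := fun v => [set x | X x /\ pi x = v])).
    by move=> v Vv bF; apply: hn; exists v.
  by apply: big_mono bX => x Xx; exists (pi x) => //; exists x.
exists [set x | X x /\ pi x = v]; split; first by move=> x [].
split; first by apply: (big_sub_eq _ XK bF) => x [].
suff -> : pi @` [set x | X x /\ pi x = v] = [set v] by [].
apply/seteqP; split; first by move=> _ [x [_ <-] <-].
by move=> _ ->; have [x [Xx pxv]] := big_n0 bF; exists x.
Qed.


Lemma finite_covered I (A : set I) : finite_set A ->
  exists s : list I, A `<=` [set x | List.In x s].
Proof.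
case: (pselect (A !=set0)) => [[a0 Aa0]|hn]; last first.
  by move=> _; exists nil => x Ax; apply: hn; exists x.
move=> [n /card_eqPle [An _]].
have [f [hf hfi]] := inj_of_le An (ex_intro _ a0 Aa0).
pose h k := match pselect (exists x, A x /\ f x = k) with
  | left H => projT1 (cid H) | right _ => a0 end.
exists (List.map h (List.seq 0 n)) => x Ax /=.
apply/List.in_map_iff; exists (f x); split.
  rewrite /h; case: pselect => [H|[]]; last by exists x.
  by case: cid => y [Ay fy] /=; apply: hfi.
apply/List.in_seq; have := hf x Ax; rewrite /= => hx; lia.
Qed.

Lemma finite_list I (s : list I) : finite_set [set x | List.In x s].
Proof.
elim: s => [|a s IH]; first by rewrite (_ : [set x | _] = set0) ?finite_set0 //; apply/seteqP; split.
have -> : [set x | List.In x (a :: s)] = [set a] `|` [set x | List.In x s].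
  by apply/seteqP; split => x /= [->|h]; by [left|right].
by rewrite finite_setU; split => //; exact: finite_set1.
Qed.

Definition cov S I (supp : S -> set I) (n : nat) (t : S) :=
  exists s : list I, (List.length s <= n)%N /\ supp t `<=` [set x | List.In x s].

Definition delta_sys S I (supp : S -> set I) (Z : set S) (R : set I) :=
  forall f g, Z f -> Z g -> f <> g -> forall i, supp f i -> supp g i -> R i.

Lemma delta_n n : forall S I (supp : S -> set I) (X : set S), X #= [set: K] ->
  (forall t, X t -> cov supp n t) ->
  exists Z, Z `<=` X /\ Z #= [set: K] /\
    exists r : list I, delta_sys supp Z [set x | List.In x r].
Proof.
elim: n => [|n IH] S I supp X XK hcov.
  exists X; split => //; split => //; exists nil => f g Xf _ _ i fi _.
  have [[|a s] [hs hsub]] := hcov f Xf; last by [].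
  exact: hsub _ fi.
have bX := eq_big XK.
case: (pselect (exists a, big [set t | X t /\ supp t a])) => [[a ba]|hB].
  have XaK := big_sub_eq (fun t (h : X t /\ supp t a) => h.1) XK ba.
  have hcov' : forall t, [set t | X t /\ supp t a] t ->
      cov (fun t => [set i | supp t i /\ i <> a]) n t.
    move=> t [Xt sa]; have [s [hs hsub]] := hcov t Xt.
    exists (List.remove (fun x y => pselect (x = y)) a s); split.
      have := @List.remove_length_lt _ (fun x y => pselect (x = y)) s a (hsub a sa).
      move: hs; clear; lia.
    by move=> i [si ia]; apply: List.in_in_remove => //; exact: hsub.
  have [Z [ZXa [ZK [r hr]]]] := IH S I (fun t => [set i | supp t i /\ i <> a]) _ XaK hcov'.
  exists Z; split; first by move=> t /ZXa [].
  split => //; exists (a :: r) => f g Zf Zg fg i fi gi /=.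
  case: (pselect (i = a)) => [->|ia]; first by left.
  by right; apply: (hr f g Zf Zg fg i).
pose PP := [set M : set S | M `<=` X /\ delta_sys supp M set0].
have [M [[MX MD] Mmax]] : exists M, PP M /\ forall B, M `<` B -> ~ PP B.
  apply: Zorn_bigcup => FF FFP Ftot; split.
    by move=> t [M /FFP [MX _] Mt]; apply: MX.
  move=> f g [M1 /[dup] F1 /FFP [_ D1] M1f] [M2 /[dup] F2 /FFP [_ D2] M2g].
  have [M12|M21] := Ftot _ _ F1 F2.
    by apply: D2 => //; apply: M12.
  by apply: D1 => //; apply: M21.
have bM : big M.
  apply: contrapT => nbM.
  have nbU : ~ big (\bigcup_(m in M) supp m).
    apply: union_small => // m Mm; apply: finite_small.
    have [s [_ hs]] := hcov m (MX m Mm).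
    exact: sub_finite_set hs (finite_list s).
  have nbR : ~ big (\bigcup_(a in \bigcup_(m in M) supp m) [set t | X t /\ supp t a]).
    by apply: (union_small nbU) => a _ hb; apply: hB; exists a.
  apply: (union2_small nbM nbR); apply: big_mono bX => t Xt.
  case: (pselect (M t)) => Mt; [by left|right].
  have : exists m, M m /\ exists i, supp t i /\ supp m i.
    apply: contrapT => hn; apply: (Mmax (M `|` [set t])).
      split; first by move=> x Mx; left.
      by move=> /(_ t (or_intror erefl)).
    split; first by move=> x [/MX|->].
    move=> f g [Mf|->] [Mg|->] fg i fi gi.
    - exact: MD fi gi.
    - by apply: hn; exists f; split => //; exists i.
    - by apply: hn; exists g; split => //; exists i.
    - by [].
  move=> [m [Mm [i [ti mi]]]]; exists i; first by exists m.
  by split.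
exists M; split => //; split; first exact: (big_sub_eq MX XK bM).
by exists nil => f g Mf Mg fg i fi gi; apply: (MD f g Mf Mg fg i fi gi).
Qed.

Lemma delta S I (supp : S -> set I) (X : set S) :
  (forall t, finite_set (supp t)) -> X #= [set: K] ->
  exists Z, Z `<=` X /\ Z #= [set: K] /\
    exists r : list I, delta_sys supp Z [set x | List.In x r].
Proof.
move=> hfin XK.
have [n bn] : exists n, big [set t | X t /\ cov supp n t].
  apply: contrapT => hn.
  have := @union_small nat S [set: nat] (fun n => [set t | X t /\ cov supp n t]).
  apply; first by apply: countable_small; exact: countableP.
    by move=> n _ bn; apply: hn; exists n.
  apply: big_mono (eq_big XK) => t Xt.
  have [s hs] := finite_covered (hfin t).
  by exists (List.length s) => //; split => //; exists s.
have XnK := big_sub_eq (fun t (h : X t /\ cov supp n t) => h.1) XK bn.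
have [Z [ZX [ZK hZ]]] := @delta_n n S I supp _ XnK (fun t h => h.2).
by exists Z; split => // t /ZX [].
Qed.
End Card.

Lemma filter_elem (D : set_system nat) (A : set nat) : ProperFilter D -> D A -> exists n, A n.
Proof.
move=> PD DA; apply: contrapT => hn; apply: (filter_not_empty D).
suff <- : A = set0 by [].
by apply/seteqP; split => // n An; apply: hn; exists n.
Qed.

Lemma ultra_plus (D : set_system nat) (C : set nat) : UltraFilter D ->
  (forall A, D A -> exists n, A n /\ C n) -> D C.
Proof.
move=> UD hC; case: (in_ultra_setVsetC C UD) => // /hC [n [nC Cn]].
by exfalso; apply: nC.
Qed.

Definition Lk T (le : T -> T -> Prop) (DD : set (set_system nat)) (Y : set T) :=
  forall D, DD D -> F_linked le D Y.

Definition Kn T (le : T -> T -> Prop) (K : Type) (DD : set (set_system nat)) :=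
  forall X : set T, X #= [set: K] ->
    exists Y : set T, Y `<=` X /\ Y #= [set: K] /\ Lk le DD Y.

Lemma Lk_mono T (le : T -> T -> Prop) DD (Y Y' : set T) : Y `<=` Y' -> Lk le DD Y' -> Lk le DD Y.
Proof. by move=> YY' hY D DD_D p hp; apply: hY => // n; apply: YY'. Qed.

Lemma singleton_linked T (le : T -> T -> Prop) DD (u : T) :
  (forall D, DD D -> ProperFilter D) -> (forall x, le x x) -> Lk le DD [set u].
Proof.
move=> hP hr D DD_D p hp; exists u => A DA r ru.
have [n An] := filter_elem (hP D DD_D) DA.
by exists r, n; split; [exact: hr|split => //; rewrite (hp n)].
Qed.

Section Forcing.
Variables (I : Type) (P : I -> fposet).

Definition restr (R : set I) (f : forall i, P i) : forall i, P i :=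
  fun i => if pselect (R i) then f i else fone (P i).

Lemma restr_supp R f : Defs.support (restr R f) `<=` R.
Proof. by move=> i; rewrite /Defs.support /restr /=; case: pselect. Qed.

Definition rho (R : set I) (f : fsprod P) : subprod P R :=
  exist _ (restr R (sval f)) (@restr_supp R (sval f)).

Lemma not_supp (f : forall i, P i) i : ~ Defs.support f i -> f i = fone (P i).
Proof. by move=> h; apply: contrapT => h'; apply: h. Qed.

Lemma core (D : set_system nat) (hD : ProperFilter D) (R : set I) (hR : finite_set R)
  (Z : set (fsprod P)) :
  delta_sys (fun f : fsprod P => Defs.support (sval f)) Z R ->
  F_linked (@subprod_le I P R) D (rho R @` Z) -> F_linked (@fsprod_le I P) D Z.
Proof.
move=> hdel hlink p hp.
case: (pselect (exists x, forall A, D A -> exists n, A n /\ p n = x)) => [[x hx]|hb].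
  exists x => A DA r rx; have [n [An pn]] := hx A DA.
  by exists r, n; split; [move=> i; exact: fle_refl|split => //; rewrite pn].
have hb' : forall x, exists A, D A /\ forall n, A n -> p n <> x.
  move=> x; apply: contrapT => hn; apply: hb; exists x => A DA.
  apply: contrapT => hn2; apply: hn; exists A; split => // n An pnx.
  by apply: hn2; exists n.
have [q' hq'] := hlink (fun n => rho R (p n)) (fun n => ex_intro2 _ _ (p n) (hp n) erefl).
have qfin : finite_set (Defs.support (sval q')) := sub_finite_set (svalP q') hR.
exists (exist _ (sval q') qfin) => A DA r rq.
have [l hl] := finite_covered (svalP r).
have [A' [DA' hA']] : exists A', D A' /\ forall n, A' n -> forall i, List.In i l ->
    ~ R i -> ~ Defs.support (sval (p n)) i.
  elim: (l) => [|i l' [A1 [DA1 hA1]]]; first by exists setT; split => //; exact: filterT.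
  case: (pselect (exists m, Defs.support (sval (p m)) i /\ ~ R i)) => [[m [sm nR]]|hn].
    have [Ax [DAx hAx]] := hb' (p m).
    exists (A1 `&` Ax); split; first exact: filterI.
    move=> n [A1n Axn] j [<-|jl'] nRj; last exact: hA1.
    by move=> snj; apply: nRj; exact: (hdel (p n) (p m) (hp n) (hp m) (hAx n Axn) _ snj sm).
  exists A1; split => // n A1n j [<-|jl'] nRj; last exact: hA1.
  by move=> snj; apply: hn; exists n.
have r'q' : subprod_le (rho R r) q'.
  move=> i; rewrite /= /restr; case: pselect => Ri; first exact: (rq i).
  have /not_supp -> : ~ Defs.support (sval q') i by move=> /(svalP q').
  exact: fle_refl.
have [s' [n [s'r [[An A'n] s'p]]]] := hq' (A `&` A') (filterI DA DA') _ r'q'.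
pose s : forall i, P i := fun i => if pselect (R i) then sval s' i
  else if pselect (Defs.support (sval r) i) then sval r i else sval (p n) i.
have sfin : finite_set (Defs.support s).
  apply: (@sub_finite_set _ _ (R `|` (Defs.support (sval r) `|` Defs.support (sval (p n))))).
    move=> i; rewrite /Defs.support /s /=; case: pselect => Ri; first by left.
    by case: pselect => hr hs; [right; left|right; right].
  rewrite !finite_setU; split => //; split; [exact: (svalP r)|exact: (svalP (p n))].
exists (exist _ s sfin), n; split; last split => //.
  move=> i; rewrite /s /=; case: (pselect (R i)) => Ri.
    by have := s'r i; rewrite /= /restr; case: pselect.
  case: pselect => hr; first exact: fle_refl.
  by rewrite (not_supp hr); exact: fle_one.
move=> i; rewrite /s /=; case: (pselect (R i)) => Ri.
  by have := s'p i; rewrite /= /restr; case: pselect.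
case: pselect => hr; last exact: fle_refl.
by rewrite (not_supp (hA' n A'n i (hl i hr) Ri)); exact: fle_one.
Qed.


Lemma prod_linked (D : set_system nat) (hU : UltraFilter D) (R : set I) (hR : finite_set R)
  (Y : set (subprod P R)) :
  (forall i, R i -> F_linked (@fle (P i)) D ((fun f : subprod P R => sval f i) @` Y)) ->
  F_linked (@subprod_le I P R) D Y.
Proof.
move=> hY p hp.
have hq : forall i (Ri : R i), exists q, forces_Wpos (@fle (P i)) D (fun n => sval (p n) i) q.
  by move=> i Ri; apply: (hY i Ri) => n; exists (p n).
pose qf : forall i, P i := fun i => match pselect (R i) with
  | left Ri => projT1 (cid (hq i Ri)) | right _ => fone (P i) end.
have qsupp : Defs.support qf `<=` R.
  by move=> i; rewrite /Defs.support /qf /=; destruct (pselect (R i)).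
exists (exist _ qf qsupp) => A DA r rq.
pose C i := [set n | exists s, fle s (sval r i) /\ fle s (sval (p n) i)].
have DC : forall i, R i -> D (C i).
  move=> i Ri; apply: ultra_plus => A0 DA0.
  have := rq i; rewrite /= /qf; destruct (pselect (R i)) as [Ri'|] => // riq.
  destruct (cid (hq i Ri')) as [q hqi]; rewrite /=.
  have [s [n [sr [A0n sp]]]] := hqi A0 DA0 _ riq.
  by exists n; split => //; exists s.
have [l hl] := finite_covered hR.
have [A' [DA' hA']] : exists A', D A' /\ forall n, A' n -> forall i, List.In i l -> R i -> C i n.
  elim: (l) => [|i l' [A1 [DA1 hA1]]]; first by exists setT; split => //; exact: filterT.
  case: (pselect (R i)) => Ri.
    exists (A1 `&` C i); split; first by apply: filterI => //; exact: DC.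
    by move=> n [A1n Cn] j [<-|jl'] Rj //; apply: hA1.
  exists A1; split => // n A1n j [<-|jl'] Rj //; exact: hA1.
have [n [An A'n]] := filter_elem (ultra_proper) (filterI DA DA').
have HC : forall i, R i -> C i n by move=> i Ri; exact: hA' n A'n i (hl i Ri) Ri.
pose s : forall i, P i := fun i => match pselect (R i) with
  | left Ri => projT1 (cid (HC i Ri)) | right _ => sval r i end.
have ssupp : Defs.support s `<=` R.
  move=> i; rewrite /Defs.support /s /=; destruct (pselect (R i)) as [|Ri] => // h.
  exact: (svalP r i h).
exists (exist _ s ssupp), n; split; last split => //.
  move=> i; rewrite /= /s; destruct (pselect (R i)) as [Ri|Ri]; last exact: fle_refl.
  by destruct (cid (HC i Ri)) as [x []].
move=> i; rewrite /= /s; destruct (pselect (R i)) as [Ri|Ri].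
  by destruct (cid (HC i Ri)) as [x []].
have /not_supp -> : ~ Defs.support (sval (p n)) i by move=> /(svalP (p n)).
exact: fle_one.
Qed.

End Forcing.

Section Main.
Variables (K : Type) (hK : regular_uncountable K) (I : Type) (P : I -> fposet).

Lemma general DD (hDD : forall D, DD D -> ProperFilter D) :
  (forall J, finite_set J -> Kn (@subprod_le I P J) K DD) -> Kn (@fsprod_le I P) K DD.
Proof.
move=> hJ X XK.
have [Z [ZX [ZK [r hr]]]] := delta hK (fun t : fsprod P => svalP t) XK.
have hR : finite_set [set x | List.In x r] := finite_list r.
have [Y [YZ [YK hY]]] := shrink hK (rho [set x | List.In x r])
  (hJ _ hR) (fun u => singleton_linked hDD (fun x i => fle_refl _)) ZK.
exists Y; split; first by move=> y /YZ /ZX.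
split => // D DD_D.
apply: (core (hDD D DD_D) hR) (hY D DD_D).
by move=> f g Yf Yg; exact: hr (YZ _ Yf) (YZ _ Yg).
Qed.

Lemma fin_prod DD (hDD : forall D, DD D -> UltraFilter D) :
  (forall i, Kn (@fle (P i)) K DD) ->
  forall J, finite_set J -> Kn (@subprod_le I P J) K DD.
Proof.
move=> hi J hJ X XK.
have [l hl] := finite_covered hJ.
have : exists Y, Y `<=` X /\ Y #= [set: K] /\ forall i, List.In i l ->
    Lk (@fle (P i)) DD ((fun f : subprod P J => sval f i) @` Y).
  elim: (l) => [|i l' [Y [YX [YK hY]]]]; first by exists X; split => //; split.
  have [Y' [Y'Y [Y'K hY']]] := shrink hK (fun f : subprod P J => sval f i) (hi i)
    (fun u => singleton_linked (fun D h => @ultra_proper _ _ (hDD D h)) (@fle_refl _)) YK.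
  exists Y'; split; first by move=> y /Y'Y /YX.
  split => // j [<-|jl] //.
  by apply: Lk_mono (hY j jl); apply: image_subset Y'Y.
move=> [Y [YX [YK hY]]]; exists Y; split => //; split => // D DD_D.
apply: (prod_linked (hDD D DD_D) hJ) => i Ji.
exact: hY i (hl i Ji) D DD_D.
Qed.

End Main.

Unset Implicit Arguments.
Set Strict Implicit.

Theorem theorem3p21 (K : Type) (hK : regular_uncountable K)
    (F : set_system nat) (hF : free_filter F)
    (I : Type) (P : I -> fposet) :
  ((forall J : set I, finite_set J -> F_Knaster (@subprod_le I P J) K F) ->
     F_Knaster (@fsprod_le I P) K F)
  /\ (UltraFilter F ->
      (forall i, F_Knaster (@fle (P i)) K F) ->
      F_Knaster (@fsprod_le I P) K F)
  /\ ((forall i, uf_Knaster (@fle (P i)) K) ->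
      uf_Knaster (@fsprod_le I P) K).
Proof.
have toKn : forall T (le : T -> T -> Prop), F_Knaster le K F -> Kn le K [set F].
  move=> T le h X XK; have [Y [YX [YK hY]]] := h X XK.
  by exists Y; split => //; split => // D ->.
have ofKn : forall T (le : T -> T -> Prop), Kn le K [set F] -> F_Knaster le K F.
  move=> T le h X XK; have [Y [YX [YK hY]]] := h X XK.
  by exists Y; split => //; split => //; apply: hY.
have hPF : forall D, [set F] D -> ProperFilter D by move=> D ->; exact: hF.1.
split.
  move=> hJ; apply: ofKn; apply: (general hK hPF) => J hJf.
  exact: toKn (hJ J hJf).
split.
  move=> hU hi; apply: ofKn; apply: (general hK hPF).
  apply: (fin_prod hK (DD := [set F])); first by move=> D ->.
  by move=> i; apply: toKn.
move=> hi; apply: (general hK (DD := @nonprincipal_ultrafilter)).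
  by move=> D [hU _]; exact: ultra_proper.
by apply: (fin_prod hK) => // D [].
Qed.
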